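(* Let $\tau>\tau_0>0$, $\gamma>0$, $\phi_0>0$ and $\varepsilon>0$. Let $\phi(t)\equiv\phi_0$ on $[-\tau,0]$, set $$A=\frac{\gamma(\phi_0+\varepsilon)}{1-e^{-\gamma(\tau-\tau_0)}},$$ and for $\delta>0$ let $f_\delta:\mathbb{R}\to\mathbb{R}$, $f_\delta(u)=A\,e^{-(u-\phi_0)^2/\delta}$. Let $u_\delta$ be the solution on $[-\tau,\infty)$ of $$u'(t)=-\gamma u(t)+f_\delta(u(t-\tau_0))-f_\delta(u(t-\tau))e^{-\gamma(\tau-\tau_0)}\ (t>0),\qquad u(t)=\phi(t)\ (-\tau\le t\le0).$$ Then $H_0(\phi):=\phi(0)-\int_{\tau_0}^{\tau}f_\delta(\phi(-a))e^{-\gamma(a-\tau_0)}da=-\varepsilon$ for every $\delta>0$, and there exists $\delta_0>0$ such that $u_\delta(\tau)<0$ for all $0<\delta<\delta_0$. *)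

(* Defs.v *)
From Stdlib Require Import Reals.
Open Scope R_scope.

Definition A_const (gamma tau tau0 phi0 eps : R) : R :=
  gamma * (phi0 + eps) / (1 - exp (- (gamma * (tau - tau0)))).

Definition f_delta (A phi0 delta : R) (u : R) : R :=
  A * exp (- ((u - phi0) ^ 2 / delta)).

Definition phi_const (phi0 : R) : R -> R := fun _ => phi0.

Definition is_solution (gamma tau tau0 : R) (f : R -> R) (phi : R -> R) (u : R -> R) : Prop :=
  (forall t, -tau <= t <= 0 -> u t = phi t) /\
  continuity_pt u 0 /\
  (forall t, 0 < t ->
     derivable_pt_lim u t
       (- gamma * u t + f (u (t - tau0)) - f (u (t - tau)) * exp (- (gamma * (tau - tau0))))).

(* Main.v *)
Require Import Defs.
From Stdlib Require Import Reals Lra Classical.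
From Coquelicot Require Import Coquelicot.
Open Scope R_scope.

Lemma mono_le (h dh : R -> R) a b C : a <= b ->
  (forall x, a < x < b -> derivable_pt_lim h x (dh x)) ->
  (forall x, a <= x <= b -> continuity_pt h x) ->
  (forall x, a < x < b -> dh x <= C) -> h b - h a <= C * (b - a).
Proof.
intros Hab Hd Hc HC.
destruct (Req_dec a b) as [->|Hne]. { lra. }
set (df := fun x => if Rlt_dec a x then if Rlt_dec x b then dh x else C else C).
destruct (MVT_gen h a b df) as [c [Hc1 Hc2]].
- rewrite Rmin_left, Rmax_right by lra. intros x Hx. apply is_derive_Reals.
  unfold df. destruct (Rlt_dec a x); [|lra]. destruct (Rlt_dec x b); [|lra]. now apply Hd.
- rewrite Rmin_left, Rmax_right by lra. exact Hc.
- rewrite Hc2. apply Rmult_le_compat_r; [lra|]. unfold df.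
  destruct (Rlt_dec a c); [|lra]. destruct (Rlt_dec c b); [|lra]. apply HC; lra.
Qed.

Lemma mono_ge (h dh : R -> R) a b C : a <= b ->
  (forall x, a < x < b -> derivable_pt_lim h x (dh x)) ->
  (forall x, a <= x <= b -> continuity_pt h x) ->
  (forall x, a < x < b -> C <= dh x) -> C * (b - a) <= h b - h a.
Proof.
intros Hab Hd Hc HC.
assert (H := mono_le (fun x => - h x) (fun x => - dh x) a b (- C) Hab).
assert (- h b - - h a <= - C * (b - a)); [|lra].
apply H.
- intros x Hx. apply derivable_pt_lim_opp. now apply Hd.
- intros x Hx. apply continuity_pt_opp. now apply Hc.
- intros x Hx. specialize (HC x Hx). lra.
Qed.

Lemma window_le (h dh : R -> R) a b C1 C2 p w : a <= b -> 0 <= w -> 0 <= C2 ->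
  (forall x, a < x < b -> derivable_pt_lim h x (dh x)) ->
  (forall x, a <= x <= b -> continuity_pt h x) ->
  (forall x, a < x < b -> dh x <= C1 + C2) ->
  (forall x, a < x < b -> (x < p \/ p + w < x) -> dh x <= C1) ->
  h b - h a <= C1 * (b - a) + C2 * w.
Proof.
intros Hab Hw HC2 Hd Hc Hin Hout.
set (m1 := Rmin b (Rmax a p)). set (m2 := Rmax m1 (Rmin b (p + w))).
assert (a <= m1 <= b) by (unfold m1; unfold Rmin, Rmax; repeat destruct Rle_dec; lra).
assert (m1 <= m2 <= b) by (unfold m2; unfold Rmin, Rmax in *; repeat destruct Rle_dec; lra).
assert (m2 - m1 <= w) by (unfold m2, m1; unfold Rmin, Rmax; repeat destruct Rle_dec; lra).
assert (E1 : h m1 - h a <= C1 * (m1 - a)).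
{ apply (mono_le h dh); try lra.
  - intros; apply Hd; lra. - intros; apply Hc; lra.
  - intros x Hx. apply Hout; [lra|]. left. unfold m1 in Hx; unfold Rmin, Rmax in Hx;
    repeat destruct Rle_dec; lra. }
assert (E2 : h m2 - h m1 <= (C1 + C2) * (m2 - m1)).
{ apply (mono_le h dh); try lra.
  - intros; apply Hd; lra. - intros; apply Hc; lra.
  - intros; apply Hin; lra. }
assert (E3 : h b - h m2 <= C1 * (b - m2)).
{ apply (mono_le h dh); try lra.
  - intros; apply Hd; lra. - intros; apply Hc; lra.
  - intros x Hx. apply Hout; [lra|]. right. unfold m2, m1 in Hx; unfold Rmin, Rmax in Hx;
    repeat destruct Rle_dec; lra. }
assert (C2 * (m2 - m1) <= C2 * w) by (apply Rmult_le_compat_l; lra).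
nra.
Qed.

Lemma cont_pos (g : R -> R) t : continuity_pt g t -> 0 < g t ->
  exists d, 0 < d /\ forall x, Rabs (x - t) < d -> 0 < g x.
Proof.
intros Hc Hp. unfold continuity_pt, continue_in, limit1_in, limit_in in Hc.
destruct (Hc (g t / 2)) as [d [Hd H]]; [lra|].
exists d; split; auto. intros x Hx.
destruct (Req_dec x t) as [->|Hne]; [lra|].
assert (Hx' := H x). simpl in Hx'. unfold R_dist in Hx'.
assert (Rabs (g x - g t) < g t / 2) by (apply Hx'; split; [split; [exact I|intro; apply Hne; symmetry; auto]|exact Hx]).
apply Rabs_def2 in H0. lra.
Qed.

Lemma first_time (g : R -> R) a b : a <= b ->
  (forall x, a <= x <= b -> continuity_pt g x) ->
  (exists x, a <= x <= b /\ g x <= 0) ->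
  exists t, a <= t <= b /\ g t <= 0 /\ forall x, a <= x < t -> 0 < g x.
Proof.
intros Hab Hc [x0 [Hx0 Hgx0]].
set (E := fun y => a <= - y <= b /\ g (- y) <= 0).
destruct (completeness E) as [m [Hub Hl]].
{ exists (- a). intros y [Hy _]. lra. }
{ exists (- x0). split; rewrite Ropp_involutive; auto. }
assert (Hm1 : - x0 <= m) by (apply Hub; split; rewrite Ropp_involutive; auto).
assert (Hm2 : m <= - a) by (apply Hl; intros y [Hy _]; lra).
assert (Hfree : forall x, a <= x < - m -> 0 < g x).
{ intros x Hx. destruct (Rlt_le_dec 0 (g x)) as [|Hle]; auto.
  assert (E (- x)) by (split; rewrite Ropp_involutive; [lra|auto]).
  apply Hub in H. lra. }
exists (- m). split; [lra|]. split; [|exact Hfree].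
destruct (Rle_lt_dec (g (- m)) 0) as [|Hpos]; auto. exfalso.
destruct (cont_pos g (- m) (Hc (- m) ltac:(lra)) Hpos) as [d [Hd Hg]].
destruct (classic (exists y, E y /\ m - d / 2 < y)) as [[y [[Hy1 Hy2] Hy3]]|Hno].
- assert (y <= m) by (apply Hub; split; auto).
  assert (0 < g (- y)) by (apply Hg; apply Rabs_def1; lra). lra.
- assert (m <= m - d / 2); [|lra].
  apply Hl. intros y Hy. destruct (Rle_lt_dec y (m - d/2)); auto.
  exfalso; apply Hno; exists y; auto.
Qed.

Lemma dY (u : R -> R) du g c t : derivable_pt_lim u t du ->
  derivable_pt_lim (fun x => exp (g * x) * (u x - c)) t (exp (g * t) * (g * (u t - c) + du)).
Proof.
intros Hu.
assert (He : derivable_pt_lim (fun x => exp (g * x)) t (exp (g * t) * g)).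
{ apply is_derive_Reals. auto_derive; auto. ring. }
assert (Hm : derivable_pt_lim (fun x => u x - c) t (du - 0)).
{ apply (derivable_pt_lim_minus u (fun _ => c)); [exact Hu|apply derivable_pt_lim_const]. }
replace (exp (g * t) * (g * (u t - c) + du)) with
  (exp (g * t) * g * (u t - c) + exp (g * t) * (du - 0)) by ring.
apply (derivable_pt_lim_mult (fun x => exp (g * x)) (fun x => u x - c)); assumption.
Qed.

Lemma cY (u : R -> R) g c t : continuity_pt u t ->
  continuity_pt (fun x => exp (g * x) * (u x - c)) t.
Proof.
intros Hu.
apply (continuity_pt_mult (fun x => exp (g * x)) (fun x => u x - c)).
- apply derivable_continuous_pt. exists (exp (g * t) * g). apply is_derive_Reals. auto_derive; auto. ring.
- apply (continuity_pt_minus u (fun _ => c)); [exact Hu|apply continuity_pt_const; intros ?; auto].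
Qed.

Lemma exp_le x y : x <= y -> exp x <= exp y.
Proof. intros H. destruct H as [H|H]; [left; now apply exp_increasing|subst; lra]. Qed.

Lemma exp_inv_mul a : exp a * exp (- a) = 1.
Proof. rewrite <- exp_plus. replace (a + - a) with 0 by ring. apply exp_0. Qed.

Lemma exp_sol_le a w z : exp a * w <= z -> w <= z * exp (- a).
Proof.
intros H. assert (Hp := exp_pos (- a)).
assert (exp a * w * exp (- a) <= z * exp (- a)) by (apply Rmult_le_compat_r; lra).
replace (exp a * w * exp (- a)) with (w * (exp a * exp (- a))) in H0 by ring.
rewrite exp_inv_mul in H0. lra.
Qed.

Lemma exp_sol_ge a w z : z <= exp a * w -> z * exp (- a) <= w.
Proof.
intros H. assert (Hp := exp_pos (- a)).
assert (z * exp (- a) <= exp a * w * exp (- a)) by (apply Rmult_le_compat_r; lra).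
replace (exp a * w * exp (- a)) with (w * (exp a * exp (- a))) in H0 by ring.
rewrite exp_inv_mul in H0. lra.
Qed.

Lemma part1 (tau tau0 gamma phi0 eps : R)
  (htau0 : 0 < tau0) (htau : tau0 < tau) (hgamma : 0 < gamma)
  (hphi0 : 0 < phi0) (heps : 0 < eps) :
  (forall delta : R, 0 < delta ->
     exists pr : Riemann_integrable
         (fun a => f_delta (A_const gamma tau tau0 phi0 eps) phi0 delta (phi_const phi0 (- a))
                   * exp (- (gamma * (a - tau0)))) tau0 tau,
       phi_const phi0 0 - RiemannInt pr = - eps).
Proof.
intros delta Hd.
set (A := A_const gamma tau tau0 phi0 eps).
set (g := fun a => f_delta A phi0 delta (phi_const phi0 (- a)) * exp (- (gamma * (a - tau0)))).
assert (Hg : forall a, g a = A * exp (- (gamma * (a - tau0)))).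
{ intros a. unfold g, f_delta, phi_const.
  replace (- ((phi0 - phi0) ^ 2 / delta)) with 0 by (field; lra). rewrite exp_0. ring. }
set (G := fun a => - (A / gamma) * exp (- (gamma * (a - tau0)))).
assert (HI : is_RInt g tau0 tau (minus (G tau) (G tau0))).
{ apply (@is_RInt_derive R_CompleteNormedModule G g).
  - intros x _. rewrite Hg. unfold G. auto_derive; [auto|]. replace (x + - tau0) with (x - tau0) by ring. field. lra.
  - intros x _. apply (ex_derive_continuous (K:=R_AbsRing) (V:=R_NormedModule)).
    apply (ex_derive_ext (fun a => A * exp (- (gamma * (a - tau0))))).
    { intros; now rewrite Hg. }
    auto_derive; auto. }
assert (Hex : ex_RInt g tau0 tau) by (eexists; exact HI).
exists (ex_RInt_Reals_0 _ _ _ Hex).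
rewrite <- RInt_Reals. rewrite (is_RInt_unique _ _ _ _ HI).
unfold minus, plus, opp; simpl. unfold G, phi_const.
replace (gamma * (tau0 - tau0)) with 0 by ring. rewrite Ropp_0, exp_0.
assert (HE1 : exp (- (gamma * (tau - tau0))) < 1).
{ rewrite <- exp_0. apply exp_increasing. nra. }
unfold A, A_const. field. split; lra.
Qed.

Lemma mul_le_of_le_div c x y : 0 < c -> x <= y / c -> c * x <= y.
Proof. intros Hc H. apply Rmult_le_compat_l with (r:=c) in H; [|lra].
replace (c*(y/c)) with y in H by (field; lra). exact H. Qed.

Lemma part2 (tau tau0 gamma phi0 eps : R)
  (htau0 : 0 < tau0) (htau : tau0 < tau) (hgamma : 0 < gamma)
  (hphi0 : 0 < phi0) (heps : 0 < eps) :
  exists delta0 : R, 0 < delta0 /\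
     forall delta : R, 0 < delta < delta0 ->
     forall u : R -> R,
       is_solution gamma tau tau0 (f_delta (A_const gamma tau tau0 phi0 eps) phi0 delta)
         (phi_const phi0) u ->
       u tau < 0.
Proof.
set (A := A_const gamma tau tau0 phi0 eps).
set (E := exp (- (gamma * (tau - tau0)))).
assert (HE0 : 0 < E) by apply exp_pos.
assert (HE1 : E < 1) by (unfold E; rewrite <- exp_0; apply exp_increasing; nra).
assert (HA : A * (1 - E) = gamma * (phi0 + eps)) by (unfold A, A_const; fold E; field; lra).
assert (HA0 : 0 < A) by (unfold A, A_const; fold E; apply Rdiv_lt_0_compat; nra).
set (K := A * E).
assert (HK0 : 0 < K) by (unfold K; nra).
set (L := tau - tau0).
assert (HL : 0 < L) by (unfold L; lra).
set (e0 := exp (- (gamma * tau0))).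
assert (He00 : 0 < e0) by apply exp_pos.
assert (He01 : e0 < 1) by (unfold e0; rewrite <- exp_0; apply exp_increasing; nra).
set (th := 1 - e0).
assert (Hth : 0 < th < 1) by (unfold th; lra).
set (M := eps * exp (- (gamma * tau))).
assert (HMe : exp (- (gamma * tau)) = e0 * E).
{ unfold e0, E. rewrite <- exp_plus. f_equal. ring. }
assert (HM : 0 < M) by (unfold M; rewrite HMe; apply Rmult_lt_0_compat; [lra|nra]).
set (kappa := Rmin (M / (4 * A)) (Rmin (th * phi0 / (8 * A)) (1 / gamma))).
assert (Hk0 : 0 < kappa).
{ unfold kappa. repeat apply Rmin_glb_lt; apply Rdiv_lt_0_compat; nra. }
assert (Hk1 : kappa <= M / (4 * A)) by apply Rmin_l.
assert (Hk2 : kappa <= th * phi0 / (8 * A)) by (eapply Rle_trans; [apply Rmin_r|apply Rmin_l]).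
assert (Hk3 : kappa <= 1 / gamma) by (eapply Rle_trans; [apply Rmin_r|apply Rmin_r]).
set (D := gamma * (phi0 + eps) + K).
assert (HD0 : 0 < D) by (unfold D; nra).
set (eta := Rmin L (Rmin (M / (4 * A)) (eps * th / (4 * D)))).
assert (Hh0 : 0 < eta).
{ unfold eta. repeat apply Rmin_glb_lt; try lra; apply Rdiv_lt_0_compat; nra. }
assert (Hh1 : eta <= L) by apply Rmin_l.
assert (Hh2 : eta <= M / (4 * A)) by (eapply Rle_trans; [apply Rmin_r|apply Rmin_l]).
assert (Hh3 : eta <= eps * th / (4 * D)) by (eapply Rle_trans; [apply Rmin_r|apply Rmin_r]).
set (eh := exp (- (gamma * eta))).
assert (Heh : 0 < eh < 1) by (unfold eh; split; [apply exp_pos|rewrite <- exp_0; apply exp_increasing; nra]).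
set (ek := exp (- (gamma * kappa))).
assert (Hek : 0 < ek < 1) by (unfold ek; split; [apply exp_pos|rewrite <- exp_0; apply exp_increasing; nra]).
set (rho := Rmin (eps * (1 - eh) / 2) (Rmin (phi0 * (1 - ek) / 4) (Rmin (th * phi0 / 8) (eps * th / 8)))).
assert (Hr0 : 0 < rho).
{ unfold rho. repeat apply Rmin_glb_lt; apply Rdiv_lt_0_compat; nra. }
assert (Hr1 : rho <= eps * (1 - eh) / 2) by apply Rmin_l.
assert (Hr2 : rho <= phi0 * (1 - ek) / 4) by (eapply Rle_trans; [apply Rmin_r|apply Rmin_l]).
assert (Hr3 : rho <= th * phi0 / 8) by (eapply Rle_trans; [apply Rmin_r|eapply Rle_trans; [apply Rmin_r|apply Rmin_l]]).
assert (Hr4 : rho <= eps * th / 8) by (eapply Rle_trans; [apply Rmin_r|eapply Rle_trans; [apply Rmin_r|apply Rmin_r]]).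
set (bs := Rmin K (M / (4 * L))).
assert (Hbs0 : 0 < bs) by (unfold bs; apply Rmin_glb_lt; [lra|apply Rdiv_lt_0_compat; lra]).
assert (Hbs1 : bs <= K) by apply Rmin_l.
assert (Hbs2 : bs <= M / (4 * L)) by apply Rmin_r.
set (delta0 := bs * rho ^ 2 / A).
exists delta0. split.
{ unfold delta0. apply Rdiv_lt_0_compat; [|lra]. apply Rmult_lt_0_compat; [lra|]. apply pow_lt; lra. }
intros delta [Hd0 Hd1] u Hsol. destruct Hsol as [Hinit [Hc0 Hder]].
set (f := f_delta A phi0 delta) in *.
assert (Hf0 : forall v, 0 <= f v).
{ intros v. unfold f, f_delta. apply Rmult_le_pos; [lra|left; apply exp_pos]. }
assert (HfA : forall v, f v <= A).
{ intros v. unfold f, f_delta. rewrite <- (Rmult_1_r A) at 2. apply Rmult_le_compat_l; [lra|].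
  rewrite <- exp_0. apply exp_le.
  assert (0 <= (v - phi0) ^ 2 / delta) by (apply Rdiv_le_0_compat; [apply pow2_ge_0|lra]). lra. }
assert (Hfphi : f phi0 = A).
{ unfold f, f_delta. replace (- ((phi0 - phi0) ^ 2 / delta)) with 0 by (field; lra).
  rewrite exp_0. ring. }
set (beta := A * exp (- (rho ^ 2 / delta))).
assert (Hfg : forall v, (phi0 + rho <= v \/ v <= phi0 - rho) -> f v <= beta).
{ intros v Hv. unfold f, f_delta, beta. apply Rmult_le_compat_l; [lra|]. apply exp_le.
  assert (rho ^ 2 / delta <= (v - phi0) ^ 2 / delta); [|lra].
  unfold Rdiv. apply Rmult_le_compat_r; [left; apply Rinv_0_lt_compat; lra|].
  destruct Hv; nra. }
assert (Hb0 : 0 <= beta) by (unfold beta; left; apply Rmult_lt_0_compat; [lra|apply exp_pos]).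
assert (Hbbs : beta < bs).
{ set (q := rho ^ 2 / delta).
  assert (Hq : 0 < q) by (unfold q; apply Rdiv_lt_0_compat; [apply pow_lt|]; lra).
  assert (Hexq : q < exp q) by (assert (H := exp_ineq1_le q); lra).
  assert (Hbq : beta * exp q = A) by (unfold beta; fold q; rewrite Rmult_assoc, Rmult_comm with (r1 := exp (- q)), exp_inv_mul; ring).
  assert (HAq : A < bs * q).
  { unfold q. assert (Hr2p : 0 < rho ^ 2) by (apply pow_lt; lra).
    assert (A * delta < bs * rho ^ 2).
    { replace (bs * rho ^ 2) with (A * delta0) by (unfold delta0; field; lra). nra. }
    apply (Rmult_lt_reg_r delta); [lra|]. replace (bs * (rho ^ 2 / delta) * delta) with (bs * rho ^ 2) by (field; lra). lra. }
  assert (Hep := exp_pos q). nra. }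
assert (HD : forall t, 0 < t <= tau -> derivable_pt_lim u t (- gamma * u t + f (u (t - tau0)) - K)).
{ intros t Ht. assert (Hu : u (t - tau) = phi0) by (rewrite Hinit; [reflexivity|lra]).
  specialize (Hder t ltac:(lra)). rewrite Hu, Hfphi in Hder. exact Hder. }
assert (HC : forall t, 0 <= t -> continuity_pt u t).
{ intros t Ht. destruct (Req_dec t 0) as [->|Hne]; [exact Hc0|].
  apply derivable_continuous_pt. econstructor. apply (Hder t). lra. }
assert (HY : forall c t, 0 < t <= tau -> derivable_pt_lim (fun x => exp (gamma * x) * (u x - c)) t
   (exp (gamma * t) * (f (u (t - tau0)) - K - gamma * c))).
{ intros c t Ht.
  replace (exp (gamma * t) * (f (u (t - tau0)) - K - gamma * c)) with
     (exp (gamma * t) * (gamma * (u t - c) + (- gamma * u t + f (u (t - tau0)) - K))) by ring.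
  apply dY. apply HD; lra. }
assert (HYc : forall c t, 0 <= t -> continuity_pt (fun x => exp (gamma * x) * (u x - c)) t).
{ intros c t Ht. apply cY. apply HC; lra. }
assert (S1 : forall s, 0 <= s <= tau0 -> u s = phi0 + eps - eps * exp (- (gamma * s))).
{ intros s Hs.
  set (Y := fun x => exp (gamma * x) * (u x - (phi0 + eps))).
  assert (Hd : forall x, 0 < x < s -> derivable_pt_lim Y x ((fun _ => 0) x)).
  { intros x Hx. simpl.
    replace 0 with (exp (gamma * x) * (f (u (x - tau0)) - K - gamma * (phi0 + eps))).
    - apply HY; lra.
    - rewrite Hinit by lra. unfold phi_const. rewrite Hfphi. unfold K.
      replace (A - A * E - gamma * (phi0 + eps)) with (A * (1 - E) - gamma * (phi0 + eps)) by ring.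
      rewrite HA. ring. }
  assert (Hc : forall x, 0 <= x <= s -> continuity_pt Y x) by (intros; apply HYc; lra).
  assert (H1 := mono_le Y (fun _ => 0) 0 s 0 ltac:(lra) Hd Hc ltac:(intros; lra)).
  assert (H2 := mono_ge Y (fun _ => 0) 0 s 0 ltac:(lra) Hd Hc ltac:(intros; lra)).
  assert (HY0 : Y 0 = - eps).
  { unfold Y. rewrite Hinit by lra. unfold phi_const. rewrite Rmult_0_r, exp_0. ring. }
  assert (HYs : exp (gamma * s) * (u s - (phi0 + eps)) = - eps) by (unfold Y in *; lra).
  assert (Ha := exp_sol_le (gamma * s) _ _ (Req_le _ _ HYs)).
  assert (Hb := exp_sol_ge (gamma * s) _ _ (Req_le _ _ (eq_sym HYs))).
  lra. }
set (X := u tau0).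
assert (HX : X = phi0 + eps * th) by (unfold X, th, e0; rewrite S1 by lra; ring).
set (c0 := - K / gamma).
assert (Hgc0 : gamma * c0 = - K) by (unfold c0; field; lra).
assert (HXc0 : 0 < X - c0).
{ rewrite HX. unfold c0. assert (0 < K / gamma) by (apply Rdiv_lt_0_compat; lra). nra. }
assert (S3 : forall s, eta <= s <= tau0 + eta -> phi0 + rho < u s).
{ intros s Hs. destruct (Rle_lt_dec s tau0) as [Hs0|Hs0].
  - rewrite S1 by lra.
    assert (exp (- (gamma * s)) <= eh) by (unfold eh; apply exp_le; nra).
    assert (eps * exp (- (gamma * s)) <= eps * eh) by (apply Rmult_le_compat_l; lra).
    assert (0 < eps * (1 - eh)) by nra. lra.
  - set (Y := fun x => exp (gamma * x) * (u x - c0)).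
    set (dh := fun x => exp (gamma * x) * (f (u (x - tau0)) - K - gamma * c0)).
    assert (H1 := mono_ge Y dh tau0 s 0 ltac:(lra)
       ltac:(intros x Hx; apply HY; unfold L in Hh1; lra)
       ltac:(intros x Hx; apply HYc; lra)
       ltac:(intros x Hx; unfold dh; rewrite Hgc0; assert (Hp := exp_pos (gamma * x));
             assert (Hq := Hf0 (u (x - tau0))); nra)).
    unfold Y in H1. fold X in H1.
    assert (H2 : exp (gamma * tau0) * (X - c0) <= exp (gamma * s) * (u s - c0)) by lra.
    apply exp_sol_ge in H2.
    replace (exp (gamma * tau0) * (X - c0) * exp (- (gamma * s))) with
       ((X - c0) * exp (- (gamma * (s - tau0)))) in H2
       by (replace (- (gamma * (s - tau0))) with (gamma * tau0 + - (gamma * s)) by ring;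
           rewrite exp_plus; ring).
    assert (H3 := exp_ineq1_le (- (gamma * (s - tau0)))).
    assert (H4 : (X - c0) * (1 - gamma * eta) <= u s - c0).
    { assert ((X - c0) * (1 + - (gamma * (s - tau0))) <= (X - c0) * exp (- (gamma * (s - tau0))))
        by (apply Rmult_le_compat_l; lra).
      assert ((X - c0) * (1 - gamma * eta) <= (X - c0) * (1 + - (gamma * (s - tau0))))
        by (apply Rmult_le_compat_l; nra).
      lra. }
    assert (H5 : eta * D <= eps * th / 4).
    { apply (Rmult_le_compat_r D) in Hh3; [|lra]. replace (eps * th / (4 * D) * D) with (eps * th / 4) in Hh3 by (field; lra). lra. }
    assert (H6 : gamma * (X - c0) <= D).
    { unfold D. rewrite Rmult_minus_distr_l, Hgc0, HX. unfold th.
      assert (0 < eps * e0) by nra. nra. }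
    assert (H7 : eta * (gamma * (X - c0)) <= eta * D) by (apply Rmult_le_compat_l; lra).
    nra. }
assert (Hcont1 : forall g0 : R -> R, (forall x, g0 x = u x - (phi0 + rho)) -> True) by auto.
assert (S4 : exists p, forall s, eta <= s <= L -> (s < p \/ p + kappa < s) ->
          (phi0 + rho < u s \/ u s < phi0 - rho)).
{ destruct (classic (exists s, eta <= s <= L /\ u s - (phi0 + rho) <= 0)) as [Hex|Hno].
  - destruct (first_time (fun s => u s - (phi0 + rho)) eta L) as [t1 [Ht1 [Hgt1 Hbef]]].
    + lra.
    + intros x Hx. apply (continuity_pt_minus u (fun _ => phi0 + rho)); [apply HC; lra|].
      apply continuity_pt_const. intros ? ?; auto.
    + exact Hex.
    + simpl in Hgt1, Hbef.
      assert (Ht1b : tau0 + eta < t1).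
      { destruct (Rlt_le_dec (tau0 + eta) t1); auto. assert (H := S3 t1 ltac:(lra)). lra. }
      assert (Hafter : forall s, t1 + kappa <= s <= L -> u s < phi0 - rho).
      { destruct (classic (exists s, t1 + kappa <= s <= L /\ (phi0 - rho) - u s <= 0)) as [Hex2|Hno2].
        - exfalso.
          destruct (first_time (fun s => (phi0 - rho) - u s) (t1 + kappa) L) as [t2 [Ht2 [Hgt2 Hbef2]]].
          + destruct Hex2 as [s [Hs _]]. lra.
          + intros x Hx. apply (continuity_pt_minus (fun _ => phi0 - rho) u); [|apply HC; lra].
            apply continuity_pt_const. intros ? ?; auto.
          + exact Hex2.
          + simpl in Hgt2, Hbef2.
            set (c := (beta - K) / gamma).
            assert (Hgc : gamma * c = beta - K) by (unfold c; field; lra).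
            assert (Hc : c <= 0) by (unfold c; apply Rmult_le_0_r; [lra|left; apply Rinv_0_lt_compat; lra]).
            set (Y := fun x => exp (gamma * x) * (u x - c)).
            set (dh := fun x => exp (gamma * x) * (f (u (x - tau0)) - K - gamma * c)).
            assert (Hdh : forall x, t1 < x < t2 -> derivable_pt_lim Y x (dh x)).
            { intros x Hx. apply HY. unfold L in Ht2. lra. }
            assert (Hcy : forall x, t1 <= x <= t2 -> continuity_pt Y x) by (intros; apply HYc; lra).
            assert (Hout : forall x, t1 < x < t2 -> (x < t1 + tau0 \/ t1 + tau0 + kappa < x) ->
                      f (u (x - tau0)) <= beta).
            { intros x Hx [Hx1|Hx1]; apply Hfg.
              - left. assert (H := Hbef (x - tau0) ltac:(lra)). lra.
              - right. assert (H := Hbef2 (x - tau0) ltac:(lra)). lra. }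
            assert (HdhE : forall x, dh x = exp (gamma * x) * (f (u (x - tau0)) - beta))
              by (intros x; unfold dh; rewrite Hgc; ring).
            assert (HYt1 : Y t1 <= exp (gamma * t1) * (phi0 + rho - c))
              by (unfold Y; apply Rmult_le_compat_l; [left; apply exp_pos|lra]).
            assert (Hpos : phi0 <= phi0 + rho - c) by lra.
            destruct (Rle_lt_dec t2 (t1 + tau0)) as [Hcase|Hcase].
            * assert (H1 := mono_le Y dh t1 t2 0 ltac:(lra) Hdh Hcy
                 ltac:(intros x Hx; rewrite HdhE; assert (Hp := exp_pos (gamma * x));
                       assert (Hq := Hout x Hx ltac:(lra)); nra)).
              assert (H2 : exp (gamma * t2) * (u t2 - c) <= exp (gamma * t1) * (phi0 + rho - c))
                by (unfold Y in H1, HYt1; lra).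
              apply exp_sol_le in H2.
              replace (exp (gamma * t1) * (phi0 + rho - c) * exp (- (gamma * t2))) with
                 ((phi0 + rho - c) * exp (- (gamma * (t2 - t1)))) in H2
                 by (replace (- (gamma * (t2 - t1))) with (gamma * t1 + - (gamma * t2)) by ring;
                     rewrite exp_plus; ring).
              assert (H3 : exp (- (gamma * (t2 - t1))) <= ek) by (unfold ek; apply exp_le; nra).
              assert (H4 : (phi0 + rho - c) * exp (- (gamma * (t2 - t1))) <= (phi0 + rho - c) * ek)
                by (apply Rmult_le_compat_l; lra).
              assert (H5 : phi0 * (1 - ek) <= (phi0 + rho - c) * (1 - ek))
                by (apply Rmult_le_compat_r; lra).
              assert (0 < phi0 * (1 - ek)) by nra.
              lra.
            * set (C2 := exp (gamma * (t1 + tau0 + kappa)) * A).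
              assert (HC2 : 0 <= C2) by (unfold C2; left; apply Rmult_lt_0_compat; [apply exp_pos|lra]).
              assert (H1 := window_le Y dh t1 t2 0 C2 (t1 + tau0) kappa ltac:(lra) ltac:(lra) HC2 Hdh Hcy).
              assert (Hin : forall x, t1 < x < t2 -> dh x <= 0 + C2).
              { intros x Hx. rewrite HdhE.
                destruct (Rle_lt_dec x (t1 + tau0 + kappa)) as [Hx1|Hx1].
                - assert (Hp := exp_pos (gamma * x)).
                  assert (He : exp (gamma * x) <= exp (gamma * (t1 + tau0 + kappa))) by (apply exp_le; nra).
                  assert (Hq := HfA (u (x - tau0))).
                  assert (exp (gamma * x) * (f (u (x - tau0)) - beta) <= exp (gamma * x) * A)
                    by (apply Rmult_le_compat_l; lra).
                  assert (exp (gamma * x) * A <= C2) by (unfold C2; apply Rmult_le_compat_r; lra).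
                  lra.
                - assert (Hp := exp_pos (gamma * x)).
                  assert (Hq := Hout x Hx ltac:(lra)). nra. }
              assert (Hout' : forall x, t1 < x < t2 -> (x < t1 + tau0 \/ t1 + tau0 + kappa < x) -> dh x <= 0).
              { intros x Hx Hx1. rewrite HdhE. assert (Hp := exp_pos (gamma * x)).
                assert (Hq := Hout x Hx Hx1). nra. }
              specialize (H1 Hin Hout').
              assert (H2 : exp (gamma * t2) * (u t2 - c) <= exp (gamma * t1) * (phi0 + rho - c) + C2 * kappa)
                by (unfold Y in H1, HYt1; lra).
              apply exp_sol_le in H2.
              replace ((exp (gamma * t1) * (phi0 + rho - c) + C2 * kappa) * exp (- (gamma * t2))) with
                 ((phi0 + rho - c) * exp (- (gamma * (t2 - t1))) + A * kappa * exp (gamma * (t1 + tau0 + kappa - t2))) in H2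
                 by (unfold C2; replace (- (gamma * (t2 - t1))) with (gamma * t1 + - (gamma * t2)) by ring;
                     replace (gamma * (t1 + tau0 + kappa - t2)) with (gamma * (t1 + tau0 + kappa) + - (gamma * t2)) by ring;
                     rewrite !exp_plus; ring).
              assert (H3 : exp (- (gamma * (t2 - t1))) <= e0) by (unfold e0; apply exp_le; nra).
              assert (H4 : exp (gamma * (t1 + tau0 + kappa - t2)) <= 3).
              { eapply Rle_trans; [|apply exp_le_3]. apply exp_le.
                assert (gamma * kappa <= 1).
                { apply (Rmult_le_compat_l gamma) in Hk3; [|lra].
                  replace (gamma * (1 / gamma)) with 1 in Hk3 by (field; lra). exact Hk3. }
                nra. }
              assert (H5 : (phi0 + rho - c) * exp (- (gamma * (t2 - t1))) <= (phi0 + rho - c) * e0)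
                by (apply Rmult_le_compat_l; lra).
              assert (H6 : A * kappa * exp (gamma * (t1 + tau0 + kappa - t2)) <= A * kappa * 3)
                by (apply Rmult_le_compat_l; nra).
              assert (H7 : A * kappa <= th * phi0 / 8).
              { apply (Rmult_le_compat_l A) in Hk2; [|lra].
                replace (A * (th * phi0 / (8 * A))) with (th * phi0 / 8) in Hk2 by (field; lra). exact Hk2. }
              assert (H8 : th * phi0 <= th * (phi0 + rho - c)) by (apply Rmult_le_compat_l; lra).
              assert (0 < th * phi0) by nra.
              unfold th in *. lra.
        - intros s Hs. destruct (Rlt_le_dec (u s) (phi0 - rho)) as [|Hle]; auto.
          exfalso; apply Hno2; exists s; split; [exact Hs|lra]. }
      exists t1. intros s Hs [Hlt|Hgt].
      * left. assert (H := Hbef s ltac:(lra)). lra.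
      * right. apply Hafter. lra.
  - exists (L + 1). intros s Hs _. left.
    destruct (Rlt_le_dec (phi0 + rho) (u s)) as [|Hle]; auto.
    exfalso; apply Hno; exists s; split; [exact Hs|lra]. }
destruct S4 as [p Hp].
set (Z := fun x => exp (gamma * x) * (u x - c0)).
set (dz := fun x => exp (gamma * x) * (f (u (x - tau0)) - K - gamma * c0)).
assert (HdzE : forall x, dz x = exp (gamma * x) * f (u (x - tau0))) by (intros x; unfold dz; rewrite Hgc0; ring).
assert (HdzA : forall x, 0 < x <= tau -> dz x <= exp (gamma * tau) * A).
{ intros x Hx. rewrite HdzE.
  assert (exp (gamma * x) <= exp (gamma * tau)) by (apply exp_le; nra).
  assert (Hq := HfA (u (x - tau0))). assert (Hq0 := Hf0 (u (x - tau0))).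
  assert (Hp0 := exp_pos (gamma * x)). nra. }
assert (Hdz : forall x, 0 < x <= tau -> derivable_pt_lim Z x (dz x)) by (intros; apply HY; lra).
assert (Hcz : forall x, 0 <= x -> continuity_pt Z x) by (intros; apply HYc; lra).
assert (Z1 := mono_le Z dz tau0 (tau0 + eta) (exp (gamma * tau) * A) ltac:(lra)
   ltac:(intros x Hx; apply Hdz; unfold L in Hh1; lra)
   ltac:(intros x Hx; apply Hcz; lra)
   ltac:(intros x Hx; apply HdzA; unfold L in Hh1; lra)).
assert (HeT := exp_pos (gamma * tau)).
assert (Z2 := window_le Z dz (tau0 + eta) tau (exp (gamma * tau) * beta) (exp (gamma * tau) * A)
   (p + tau0) kappa ltac:(unfold L in Hh1; lra) ltac:(lra) ltac:(nra)
   ltac:(intros x Hx; apply Hdz; lra)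
   ltac:(intros x Hx; apply Hcz; lra)
   ltac:(intros x Hx; assert (H := HdzA x ltac:(lra)); nra)).
assert (Hgood : forall x, tau0 + eta < x < tau -> (x < p + tau0 \/ p + tau0 + kappa < x) ->
          dz x <= exp (gamma * tau) * beta).
{ intros x Hx Hx1. rewrite HdzE.
  assert (Hfb : f (u (x - tau0)) <= beta).
  { apply Hfg. destruct (Hp (x - tau0) ltac:(unfold L; lra) ltac:(lra)); [left|right]; lra. }
  assert (exp (gamma * x) <= exp (gamma * tau)) by (apply exp_le; nra).
  assert (Hq0 := Hf0 (u (x - tau0))). assert (Hp0 := exp_pos (gamma * x)). nra. }
specialize (Z2 Hgood).
assert (Hsum : Z tau - Z tau0 <= exp (gamma * tau) * (A * eta + beta * L + A * kappa)).
{ assert (beta * (tau - (tau0 + eta)) <= beta * L) by (unfold L; nra). nra. }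
unfold Z in Hsum. fold X in Hsum.
assert (H2 : exp (gamma * tau) * (u tau - c0) <= exp (gamma * tau0) * (X - c0) + exp (gamma * tau) * (A * eta + beta * L + A * kappa)) by lra.
apply exp_sol_le in H2.
replace ((exp (gamma * tau0) * (X - c0) + exp (gamma * tau) * (A * eta + beta * L + A * kappa)) * exp (- (gamma * tau)))
  with ((X - c0) * E + (A * eta + beta * L + A * kappa) * (exp (gamma * tau) * exp (- (gamma * tau)))) in H2
  by (unfold E; replace (- (gamma * (tau - tau0))) with (gamma * tau0 + - (gamma * tau)) by ring; rewrite exp_plus; ring).
rewrite exp_inv_mul in H2.
assert (Hid : c0 + (X - c0) * E = - M).
{ unfold M. rewrite HMe, HX. unfold th, c0.
  assert (Hc0' : K / gamma * (1 - E) = E * (phi0 + eps)).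
  { unfold K. replace (A * E / gamma * (1 - E)) with (A * (1 - E) * E / gamma) by (field; lra).
    rewrite HA. field. lra. }
  replace (- K / gamma + (phi0 + eps * (1 - e0) - - K / gamma) * E) with
     ((phi0 + eps * (1 - e0)) * E - K / gamma * (1 - E)) by (field; lra).
  rewrite Hc0'. ring. }
assert (Hb1 : A * eta <= M / 4).
{ apply (Rmult_le_compat_l A) in Hh2; [|lra]. replace (A * (M / (4 * A))) with (M / 4) in Hh2 by (field; lra). exact Hh2. }
assert (Hb2 : A * kappa <= M / 4).
{ apply (Rmult_le_compat_l A) in Hk1; [|lra]. replace (A * (M / (4 * A))) with (M / 4) in Hk1 by (field; lra). exact Hk1. }
assert (Hb3 : beta * L < M / 4).
{ assert (beta * L < bs * L) by nra.
  apply (Rmult_le_compat_l L) in Hbs2; [|lra]. replace (L * (M / (4 * L))) with (M / 4) in Hbs2 by (field; lra).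
  nra. }
lra.
Qed.


Theorem proposition1 (tau tau0 gamma phi0 eps : R)
  (htau0 : 0 < tau0) (htau : tau0 < tau) (hgamma : 0 < gamma)
  (hphi0 : 0 < phi0) (heps : 0 < eps) :
  (forall delta : R, 0 < delta ->
     exists pr : Riemann_integrable
         (fun a => f_delta (A_const gamma tau tau0 phi0 eps) phi0 delta (phi_const phi0 (- a))
                   * exp (- (gamma * (a - tau0)))) tau0 tau,
       phi_const phi0 0 - RiemannInt pr = - eps) /\
  (exists delta0 : R, 0 < delta0 /\
     forall delta : R, 0 < delta < delta0 ->
     forall u : R -> R,
       is_solution gamma tau tau0 (f_delta (A_const gamma tau tau0 phi0 eps) phi0 delta)
         (phi_const phi0) u ->
       u tau < 0).
Proof.
split.
- exact (part1 tau tau0 gamma phi0 eps htau0 htau hgamma hphi0 heps).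
- exact (part2 tau tau0 gamma phi0 eps htau0 htau hgamma hphi0 heps).
Qed.
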